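(* Let $R$ be a commutative ring, $L$ an $R$-module and $S\subseteq L$ a subset. Then the subset module closure $\mathrm{cl}_{S,L}$, as a pair operation on all pairs $N\subseteq M$ of $R$-modules, is functorial and residual.
   Context: For $R$-modules $N\subseteq M$, $N^{\mathrm{cl}_{S,L}}_M=\{u\in M:\ s\otimes u\in\operatorname{im}(L\otimes_R N\to L\otimes_R M)\text{ for all } s\in S\}$, the map induced by the inclusion $N\hookrightarrow M$. A pair operation $p$ (here $p(N,M)=N^{\mathrm{cl}_{S,L}}_M$) is functorial if $g(p(N,M))\subseteq p(g(N),M')$ for every $R$-linear map $g:M\to M'$ and submodule $N\subseteq M$; it is residual if $p(N,M)=\pi^{-1}(p(N/P,M/P))$ whenever $P\subseteq N\subseteq M$, where $\pi:M\to M/P$ is the quotient map. *)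

(* Defs.v *)
(* Tensor products are built honestly as the free abelian
   group on L x M (multinomials' freeg) modulo the subgroup generated by
   the bilinearity/balancing relations. *)
From HB Require Import structures.
From mathcomp Require Import all_boot all_order all_algebra.
From mathcomp Require Import freeg.
Set Implicit Arguments. Unset Strict Implicit. Unset Printing Implicit Defensive.
Import Order.TTheory GRing.Theory Num.Theory.
Local Open Scope ring_scope.

Section Tensor.
Variable R : comPzRingType.

Definition is_submodule (M : lmodType R) (N : M -> Prop) : Prop :=
  N 0 /\ forall (a : R) (x y : M), N x -> N y -> N (a *: x + y).

Inductive zspan (G : zmodType) (S : G -> Prop) : G -> Prop :=
| zspan0 : zspan S 0
| zspan_gen x : S x -> zspan S x
| zspan_sub x y : zspan S x -> zspan S y -> zspan S (x - y).

Section TP.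
Variables L M : lmodType R.

Definition tfree := {freeg (L * M)%type / int}.
Definition tgen (l : L) (m : M) : tfree := << (l, m) >>.

Definition tensor_rel (x : tfree) : Prop :=
  (exists l1 l2 m, x = tgen (l1 + l2) m - tgen l1 m - tgen l2 m) \/
  (exists l m1 m2, x = tgen l (m1 + m2) - tgen l m1 - tgen l m2) \/
  (exists (r : R) l m, x = tgen (r *: l) m - tgen l (r *: m)).

Definition tensor_eq (x y : tfree) : Prop := zspan tensor_rel (x - y).

(* the image of L (x)_R N -> L (x)_R M is the class of the subgroup
   generated by the l (x) n with n in N *)
Definition tensor_image_gen (N : M -> Prop) (x : tfree) : Prop :=
  exists l n, N n /\ x = tgen l n.

Definition tensor_in_image (N : M -> Prop) (s : L) (u : M) : Prop :=
  exists x, zspan (tensor_image_gen N) x /\ tensor_eq (tgen s u) x.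

End TP.

Definition subset_cl (L : lmodType R) (S : L -> Prop) (M : lmodType R)
  (N : M -> Prop) : M -> Prop :=
  fun u => forall s, S s -> tensor_in_image N s u.

Definition image_set (A B : Type) (f : A -> B) (X : A -> Prop) : B -> Prop :=
  fun y => exists x, X x /\ f x = y.

Definition cl_functorial (L : lmodType R) (S : L -> Prop) : Prop :=
  forall (M M' : lmodType R) (g : {linear M -> M'}) (N : M -> Prop),
    is_submodule N ->
    forall u, subset_cl S N u -> subset_cl S (image_set g N) (g u).

(* residuality: M/P is represented by an arbitrary surjective linear map
   pi : M -> Q with kernel exactly P; N/P is then pi(N). *)
Definition cl_residual (L : lmodType R) (S : L -> Prop) : Prop :=
  forall (M : lmodType R) (N P : M -> Prop),
    is_submodule N -> is_submodule P -> (forall x, P x -> N x) ->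
    forall (Q : lmodType R) (pi : {linear M -> Q}),
      (forall q, exists x, pi x = q) ->
      (forall x, pi x = 0 <-> P x) ->
      forall u, subset_cl S N u <-> subset_cl S (image_set pi N) (pi u).

End Tensor.

(* Main.v *)
Require Import Defs.
From HB Require Import structures.
From mathcomp Require Import all_boot all_order all_algebra freeg.
Set Implicit Arguments. Unset Strict Implicit. Unset Printing Implicit Defensive.
Import Order.TTheory GRing.Theory Num.Theory.
Local Open Scope ring_scope.

Lemma zmod_id1 (V : zmodType) (X A B C P : V) :
  X - A - B = (X - C - P) + (C - A - B) + P.
Proof. by rewrite [RHS]addrAC subrK [RHS]addrA -[X - C + _]addrA addKr. Qed.
Lemma zmod_id2 (V : zmodType) (X Y Z P : V) :
  X - Y = (X - Z) - (Y - Z - P) - P.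
Proof. by rewrite opprB addrA addrAC addrK opprB addrA subrK. Qed.
Lemma zmod_id3 (V : zmodType) (X T P : V) :
  T = X - (X - T - P) - P.
Proof. by rewrite opprB addrA addrAC addrK opprB addrC subrK. Qed.

Lemma zspan_W (G H : zmodType) (A : G -> Prop) (W : H -> Prop) (f : G -> H) :
  W 0 -> (forall a b, W a -> W b -> W (a - b)) -> f 0 = 0 ->
  (forall a b, f (a - b) = f a - f b) ->
  (forall y, A y -> W (f y)) -> forall x, zspan A x -> W (f x).
Proof.
move=> W0 WB f0 fB hA x; elim => [|y Ay|a b _ Ha _ Hb].
- by rewrite f0.
- exact: hA.
- by rewrite fB; apply: WB.
Qed.

Section Aux.
Variable R : comPzRingType.
Variable L : lmodType R.

Section Phi.
Variables (M M' : lmodType R) (h : M -> M').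

Definition Phi (x : tfree L M) : tfree L M' :=
  fglift (fun p : L * M => (tgen p.1 (h p.2) : {freeg (L * M')%type / int})) x.

Lemma PhiB x y : Phi (x - y) = Phi x - Phi y.
Proof. exact: lift_is_additive. Qed.

Lemma Phi0 : Phi 0 = 0.
Proof. by rewrite -(subrr 0) PhiB subrr. Qed.

Lemma PhiD x y : Phi (x + y) = Phi x + Phi y.
Proof.
have -> : x + y = x - (0 - y) by rewrite sub0r opprK.
by rewrite PhiB PhiB Phi0 sub0r opprK.
Qed.

Lemma Phi_gen l m : Phi (tgen l m) = tgen l (h m).
Proof. by rewrite /Phi /tgen liftU scale1r. Qed.
End Phi.

Definition W (M : lmodType R) (N : M -> Prop) (y : tfree L M) : Prop :=
  exists z, zspan (tensor_image_gen N) z /\ zspan (@tensor_rel R L M) (y - z).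

Section WProps.
Variables (M : lmodType R) (N : M -> Prop).

Lemma W0 : W N 0.
Proof. by exists 0; split; [apply: zspan0|rewrite subrr; apply: zspan0]. Qed.

Lemma WB a b : W N a -> W N b -> W N (a - b).
Proof.
move=> [za [Hza Ra]] [zb [Hzb Rb]]; exists (za - zb); split.
  exact: zspan_sub.
have -> : a - b - (za - zb) = (a - za) - (b - zb).
  by rewrite !opprD !opprK addrACA.
exact: zspan_sub.
Qed.

Lemma WD a b : W N a -> W N b -> W N (a + b).
Proof.
move=> Ha Hb; have -> : a + b = a - (0 - b) by rewrite sub0r opprK.
apply: WB => //; apply: WB => //; exact: W0.
Qed.

Lemma Wrel y : tensor_rel y -> W N y.
Proof. by move=> Hy; exists 0; split; [apply: zspan0|rewrite subr0; apply: zspan_gen]. Qed.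

Lemma Wimg l n : N n -> W N (tgen l n).
Proof.
move=> Hn; exists (tgen l n); split.
  by apply: zspan_gen; exists l, n.
by rewrite subrr; apply: zspan0.
Qed.

Lemma W_in_image s u : tensor_in_image N s u <-> W N (tgen s u).
Proof. by []. Qed.
End WProps.

Lemma transport (M M' : lmodType R) (h : M -> M') (N : M -> Prop) (N' : M' -> Prop) :
  (forall y, tensor_rel y -> W N' (Phi h y)) ->
  (forall y, tensor_image_gen N y -> W N' (Phi h y)) ->
  forall x, W N x -> W N' (Phi h x).
Proof.
move=> Hr Hi x [z [Hz Rz]].
rewrite -(subrK z x) PhiD; apply: WD.
  apply: (zspan_W (@W0 _ N') (@WB _ N') (Phi0 h) (@PhiB _ _ h) Hr Rz).
apply: (zspan_W (@W0 _ N') (@WB _ N') (Phi0 h) (@PhiB _ _ h) Hi Hz).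
Qed.

Lemma rel2 (M : lmodType R) (N : M -> Prop) l m1 m2 :
  W N (tgen l (m1 + m2) - tgen l m1 - tgen l m2).
Proof. by apply: Wrel; right; left; exists l, m1, m2. Qed.

Lemma rel1 (M : lmodType R) (N : M -> Prop) l1 l2 m :
  W N (tgen (l1 + l2) m - tgen l1 m - tgen l2 m).
Proof. by apply: Wrel; left; exists l1, l2, m. Qed.

Lemma rel3 (M : lmodType R) (N : M -> Prop) (r : R) l m :
  W N (tgen (r *: l) m - tgen l (r *: m)).
Proof. by apply: Wrel; right; right; exists r, l, m. Qed.

Lemma functorial_part (S : L -> Prop) : cl_functorial S.
Proof.
move=> M M' g N _ u Hu s Ss.
have HW := (W_in_image _ _ _).1 (Hu s Ss); apply/W_in_image.
rewrite -(Phi_gen g).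
apply: (transport _ _ HW).
- move=> y [[l1 [l2 [m ->]]]|[[l [m1 [m2 ->]]]|[r [l [m ->]]]]];
    rewrite !PhiB !Phi_gen.
  + exact: rel1.
  + rewrite linearD; exact: rel2.
  + rewrite linearZ; exact: rel3.
- move=> y [l [n [Nn ->]]]; rewrite Phi_gen; apply: Wimg.
  by exists n.
Qed.

Lemma residual_part (S : L -> Prop) : cl_residual S.
Proof.
move=> M N P HN HP PN Q pi hsurj hker u; split.
  exact: (@functorial_part S M Q pi N HN u).
have exP : forall q, exists x, pi x == q.
  by move=> q; have [x <-] := hsurj q; exists x.
pose sig q := xchoose (exP q).
have sigK : forall q, pi (sig q) = q by move=> q; apply/eqP; exact: (xchooseP (exP q)).
have Nadd : forall x y, N x -> N y -> N (x + y).
  by move=> x y Hx Hy; have := HN.2 1 x y Hx Hy; rewrite scale1r.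
have PNi : forall x, pi x = 0 -> N x by move=> x /hker; exact: PN.
move=> Hu s Ss.
have HW := (W_in_image _ _ _).1 (Hu s Ss); apply/W_in_image.
have HW' : W N (tgen s (sig (pi u))).
  rewrite -(Phi_gen sig); apply: (transport _ _ HW).
  - move=> y [[l1 [l2 [m ->]]]|[[l [m1 [m2 ->]]]|[r [l [m ->]]]]];
      rewrite !PhiB !Phi_gen.
    + exact: rel1.
    + pose p := sig (m1 + m2) - (sig m1 + sig m2).
      have Pp : N p by apply: PNi; rewrite /p linearB linearD !sigK subrr.
      rewrite (zmod_id1 _ _ _ (tgen l (sig m1 + sig m2)) (tgen l p)).
      apply: WD; [apply: WD|]; last exact: Wimg.
        have -> : sig (m1 + m2) = (sig m1 + sig m2) + p by rewrite /p [RHS]addrC subrK.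
        exact: rel2.
      exact: rel2.
    + pose p := sig (r *: m) - r *: sig m.
      have Pp : N p by apply: PNi; rewrite /p linearB linearZ !sigK subrr.
      rewrite (zmod_id2 _ _ (tgen l (r *: sig m)) (tgen l p)).
      apply: WB; [apply: WB|]; last exact: Wimg.
        exact: rel3.
      have -> : sig (r *: m) = r *: sig m + p by rewrite /p [RHS]addrC subrK.
      exact: rel2.
  - move=> y [l [n' [[n [Nn <-]] ->]]]; rewrite Phi_gen; apply: Wimg.
    have -> : sig (pi n) = (sig (pi n) - n) + n by rewrite subrK.
    apply: Nadd => //; apply: PNi; by rewrite linearB sigK subrr.
pose p := sig (pi u) - u.
have Pp : N p by apply: PNi; rewrite /p linearB sigK subrr.
rewrite [tgen s u](zmod_id3 (tgen s (sig (pi u))) _ (tgen s p)).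
apply: WB; [apply: WB|]; last exact: Wimg.
  exact: HW'.
have -> : sig (pi u) = u + p by rewrite /p [RHS]addrC subrK.
exact: rel2.
Qed.

End Aux.

Theorem proposition7p4 (R : comPzRingType) (L : lmodType R) (S : L -> Prop) :
  cl_functorial S /\ cl_residual S.
Proof. split; [exact: functorial_part | exact: residual_part]. Qed.
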